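(* Let $\Lambda$ be a strongly connected finite $k$-graph. (1) Let $m,n,p,q\in\mathbb{N}^k$ and suppose $\sigma^m(x)=\sigma^n(x)$ for all $x\in\Lambda^\infty$. If $p-q=m-n$, then $\sigma^p(x)=\sigma^q(x)$ for all $x\in\Lambda^\infty$. (2) The set $\operatorname{Per}\Lambda:=\{m-n:m,n\in\mathbb{N}^k,\ \sigma^m(x)=\sigma^n(x)\text{ for all }x\in\Lambda^\infty\}$ is a subgroup of $\mathbb{Z}^k$. (3) Suppose $m,n\in\mathbb{N}^k$ with $m-n\in\operatorname{Per}\Lambda$ and $\mu\in\Lambda^m$. Then $\theta_{d(\alpha)+m,\,d(\alpha)+n}(\alpha\mu)=\alpha\theta_{m,n}(\mu)$ for all $\alpha\in\Lambda r(\mu)$, and $\theta_{m+d(\beta),\,n+d(\beta)}(\mu\beta)=\theta_{m,n}(\mu)\beta$ for all $\beta\in s(\mu)\Lambda$.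
   Context: A $k$-graph is a countable category $\Lambda$ with a functor $d:\Lambda\to\mathbb{N}^k$ such that whenever $d(\lambda)=m+n$ there are unique $\mu,\nu$ with $d(\mu)=m$, $d(\nu)=n$, $\lambda=\mu\nu$. $\Lambda^n=d^{-1}(n)$, $\Lambda^0$ = vertices, $r,s$ range and source; $\Lambda v=\{\lambda:s(\lambda)=v\}$, $v\Lambda=\{\lambda:r(\lambda)=v\}$. Standing convention: $\Lambda^{e_i}\neq\emptyset$ for each $i$. Finite: each $\Lambda^n$ finite; strongly connected: $v\Lambda w\neq\emptyset$ for all vertices $v,w$. Infinite paths: $\Omega_k=\{(m,n)\in\mathbb{N}^k\times\mathbb{N}^k:m\le n\}$ is a $k$-graph with $r(m,n)=(m,m)$, $s(m,n)=(n,n)$, $(m,n)(n,p)=(m,p)$, $d(m,n)=n-m$. An infinite path is a degree-preserving functor $x:\Omega_k\to\Lambda$; $\Lambda^\infty$ is the set of these; $r(x)=x(0,0)$; $\sigma^n(x)(p,q)=x(n+p,n+q)$; for $s(\lambda)=r(x)$, $\lambda x$ is the unique infinite path with $(\lambda x)(0,d(\lambda))=\lambda$, $\sigma^{d(\lambda)}(\lambda x)=x$; $Z(\lambda)=\{x:x(0,d(\lambda))=\lambda\}$. For $m,n\in\mathbb{N}^k$ with $\sigma^m(x)=\sigma^n(x)$ for all $x\in\Lambda^\infty$ and $\mu\in\Lambda^m$, $\theta_{m,n}(\mu)$ denotes the unique element of $\Lambda^n$ such that $\mu x=\theta_{m,n}(\mu)x$ for all $x\in Z(s(\mu))$ (in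 part (3), (1) guarantees the relevant pairs of degrees satisfy this). *)

(* Defs.v *)
From HB Require Import structures.
From mathcomp Require Import all_boot all_order all_algebra.
From Stdlib Require Import ClassicalEpsilon.
Set Implicit Arguments. Unset Strict Implicit. Unset Printing Implicit Defensive.
Import GRing.Theory.

Definition NN (k : nat) := {ffun 'I_k -> nat}.
Definition ZZ (k : nat) := {ffun 'I_k -> int}.

Definition zeroN k : NN k := [ffun => 0%N].
Definition addN k (m n : NN k) : NN k := [ffun i => (m i + n i)%N].
(* truncated pointwise subtraction; only used when m <= n pointwise *)
Definition subN k (n m : NN k) : NN k := [ffun i => (n i - m i)%N].
Definition leN k (m n : NN k) : Prop := forall i, (m i <= n i)%N.
Definition unitN k (i : 'I_k) : NN k := [ffun j => nat_of_bool (i == j)].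
Definition diffZ k (m n : NN k) : ZZ k := [ffun i => ((m i)%:Z - (n i)%:Z)%R].

(* Composition is total but only constrained on composable pairs
   (src f = rng g); kcomp f g is the composite "f g". *)
Record kgraph (k : nat) := KGraph {
  vert : countType;
  mor : countType;
  rng : mor -> vert;
  src : mor -> vert;
  idm : vert -> mor;
  kcomp : mor -> mor -> mor;
  deg : mor -> NN k;
  rng_idm : forall v, rng (idm v) = v;
  src_idm : forall v, src (idm v) = v;
  rng_comp : forall f g, src f = rng g -> rng (kcomp f g) = rng f;
  src_comp : forall f g, src f = rng g -> src (kcomp f g) = src g;
  comp_idl : forall f, kcomp (idm (rng f)) f = f;
  comp_idr : forall f, kcomp f (idm (src f)) = f;
  comp_assoc : forall f g h, src f = rng g -> src g = rng h ->
      kcomp f (kcomp g h) = kcomp (kcomp f g) h;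
  deg_idm : forall v, deg (idm v) = zeroN k;
  deg_comp : forall f g, src f = rng g -> deg (kcomp f g) = addN (deg f) (deg g);
  factorisation : forall l m n, deg l = addN m n ->
      exists! p : mor * mor,
        [/\ src p.1 = rng p.2, deg p.1 = m, deg p.2 = n & l = kcomp p.1 p.2]
}.

Section KG.
Variables (k : nat) (L : kgraph k).
Local Notation mor := (mor L).
Local Notation vert := (vert L).

Definition finite_kgraph : Prop :=
  forall n : NN k, exists s : seq mor, forall l, deg l = n -> l \in s.

Definition strongly_connected : Prop :=
  forall v w : vert, exists l : mor, rng l = v /\ src l = w.

(* standing convention: Lambda^{e_i} nonempty *)
Definition no_empty_colours : Prop :=
  forall i : 'I_k, exists l : mor, deg l = unitN i.

(* An infinite path: a degree-preserving functor Omega_k -> Lambda, given by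
   its action x m n on the morphisms (m,n), m <= n, of Omega_k
   (values at pairs with ~ m <= n are irrelevant). *)
Definition infpath (x : NN k -> NN k -> mor) : Prop :=
  [/\ forall m n, leN m n -> deg (x m n) = subN n m,
      forall m, x m m = idm (rng (x m m)) &
      forall m n p, leN m n -> leN n p ->
        src (x m n) = rng (x n p) /\ x m p = kcomp (x m n) (x n p)].

(* equality of infinite paths (as functors, i.e. on all morphisms of Omega_k) *)
Definition path_eq (x y : NN k -> NN k -> mor) : Prop :=
  forall p q, leN p q -> x p q = y p q.

(* sigma^m(x) = sigma^n(x) *)
Definition shift_eq (x : NN k -> NN k -> mor) (m n : NN k) : Prop :=
  forall p q, leN p q -> x (addN m p) (addN m q) = x (addN n p) (addN n q).

(* y is the infinite path l x : y(0, d l) = l and sigma^{d l}(y) = x *)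
Definition is_concat (l : mor) (x y : NN k -> NN k -> mor) : Prop :=
  [/\ infpath y, y (zeroN k) (deg l) = l &
      forall p q, leN p q -> y (addN (deg l) p) (addN (deg l) q) = x p q].

Definition periodic_pair (m n : NN k) : Prop :=
  forall x, infpath x -> shift_eq x m n.

Definition Per (z : ZZ k) : Prop :=
  exists m n : NN k, z = diffZ m n /\ periodic_pair m n.

Definition is_subgroup (P : ZZ k -> Prop) : Prop :=
  P 0%R /\ forall a b, P a -> P b -> P (a - b)%R.

(* defining property of theta_{m,n}(mu): an element t of Lambda^n with
   mu x = t x for all x in Z(s(mu)) *)
Definition theta_prop (m n : NN k) (mu t : mor) : Prop :=
  deg t = n /\
  forall x, infpath x -> rng (x (zeroN k) (zeroN k)) = src mu ->
    exists y z, [/\ is_concat mu x y, is_concat t x z & path_eq y z].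

(* theta_{m,n}(mu): "the unique element" with the defining property
   (chosen by Hilbert's epsilon; its existence/uniqueness is part of what
   must be proved when using it). *)
Definition theta (m n : NN k) (mu : mor) : mor :=
  epsilon (inhabits mu) (theta_prop m n mu).

End KG.
Arguments theta {k} L m n mu.

(* Main.v *)
Require Import Defs.
From mathcomp Require Import all_boot all_order all_algebra zify.
From Stdlib Require Import ClassicalEpsilon.
Set Implicit Arguments. Unset Strict Implicit. Unset Printing Implicit Defensive.

Section KGlemmas.
Variables (k : nat) (L : kgraph k).
Local Notation mor := (mor L).
Local Notation vert := (vert L).
Local Notation z0 := (zeroN k).

Ltac nneq := let i := fresh "i" in apply/ffunP => i; repeat match goal with H : leN _ _ |- _ => move: (H i); clear H end; rewrite ?ffunE /=; lia.
Ltac nnle := let i := fresh "i" in move=> i; repeat match goal with H : leN _ _ |- _ => move: (H i); clear H end; rewrite ?ffunE /=; lia.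

Lemma comp_cancel (g h g' h' : mor) : src g = rng h -> src g' = rng h' ->
  deg g = deg g' -> deg h = deg h' -> kcomp g h = kcomp g' h' -> g = g' /\ h = h'.
Proof.
move=> c c' dg dh e.
have [[p1 p2] [[/= H1 H2 H3 H4] U]] := factorisation (deg_comp c).
have A := U (g, h) (And4 c erefl erefl erefl).
have B := U (g', h') (And4 c' (esym dg) (esym dh) e).
by rewrite A in B; case: B => -> ->.
Qed.

Lemma deg0_id (f : mor) : deg f = z0 -> f = idm (rng f).
Proof.
move=> d.
have [] := @comp_cancel (idm (rng f)) f f (idm (src f)).
- by rewrite src_idm.
- by rewrite rng_idm.
- by rewrite deg_idm d.
- by rewrite deg_idm d.
- by rewrite comp_idl comp_idr.
by move=> ->.
Qed.

Lemma fact_ex (f : mor) a b : deg f = addN a b -> exists g h,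
  [/\ src g = rng h, deg g = a, deg h = b & f = kcomp g h].
Proof.
move=> d; have [[p1 p2] [[/= H1 H2 H3 H4] _]] := factorisation d.
by exists p1, p2.
Qed.

Definition fact (f : mor) (a b : NN k) : mor * mor :=
  epsilon (inhabits (f, f))
   (fun p => [/\ src p.1 = rng p.2, deg p.1 = a, deg p.2 = b & f = kcomp p.1 p.2]).

Lemma fact_spec f a b : deg f = addN a b ->
  [/\ src (fact f a b).1 = rng (fact f a b).2, deg (fact f a b).1 = a,
      deg (fact f a b).2 = b & f = kcomp (fact f a b).1 (fact f a b).2].
Proof.
move=> d; rewrite /fact; apply: (epsilon_spec (inhabits (f,f)) (fun p : mor * mor => [/\ src p.1 = rng p.2, deg p.1 = a, deg p.2 = b & f = kcomp p.1 p.2])).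
have [g [h [H1 H2 H3 H4]]] := fact_ex d.
by exists (g, h).
Qed.

Lemma fact_eq g h : src g = rng h -> fact (kcomp g h) (deg g) (deg h) = (g, h).
Proof.
move=> c.
have [] := fact_spec (deg_comp c).
case E: (fact _ _ _) => [p1 p2] /= H1 H2 H3 H4.
by have [-> ->] := comp_cancel H1 c H2 H3 (esym H4).
Qed.

Definition pre (f : mor) (b : NN k) : mor := (fact f b (subN (deg f) b)).1.
Definition seg (f : mor) (a b : NN k) : mor := (fact (pre f b) a (subN b a)).2.

Lemma seg_eq (f a g c : mor) p q : src a = rng g -> src g = rng c ->
  deg a = p -> deg g = subN q p -> leN p q ->
  f = kcomp (kcomp a g) c -> seg f p q = g.
Proof.
move=> c1 c2 da dg lpq ->.
have cc : src (kcomp a g) = rng c by rewrite src_comp.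
have dag : deg (kcomp a g) = q by rewrite deg_comp // da dg; nneq.
have dc : deg c = subN (deg (kcomp (kcomp a g) c)) q.
  by rewrite deg_comp // dag; nneq.
have e1 := fact_eq cc; rewrite dag [deg c]dc in e1.
rewrite /seg /pre e1 /=.
have e2 := fact_eq c1; rewrite da in e2.
by rewrite -dg e2.
Qed.

Lemma seg_spec (f : mor) p q : leN p q -> leN q (deg f) -> exists a c,
  [/\ src a = rng (seg f p q), src (seg f p q) = rng c, deg a = p,
      deg (seg f p q) = subN q p & f = kcomp (kcomp a (seg f p q)) c].
Proof.
move=> lpq lqf.
have d1 : deg f = addN q (subN (deg f) q) by nneq.
have [P1 P2 P3 P4] := fact_spec d1.
have d2 : deg (pre f q) = addN p (subN q p) by rewrite /pre P2; nneq.
have [Q1 Q2 Q3 Q4] := fact_spec d2.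
exists (fact (pre f q) p (subN q p)).1, (fact f q (subN (deg f) q)).2.
rewrite /seg; split => //.
- rewrite -P1 -[src (fact f q _).1]/(src (pre f q)) [in RHS]Q4 src_comp //.
by rewrite -Q4.
Qed.

Lemma seg_whole (f : mor) : seg f z0 (deg f) = f.
Proof.
apply: (@seg_eq _ (idm (rng f)) f (idm (src f))).
- by rewrite src_idm.
- by rewrite rng_idm.
- by rewrite deg_idm.
- nneq.
- nnle.
by rewrite comp_idl comp_idr.
Qed.

Lemma seg_pre (f g : mor) p q : src f = rng g -> leN p q -> leN q (deg f) ->
  seg (kcomp f g) p q = seg f p q.
Proof.
move=> c lpq lqf.
have [a [c' [H1 H2 H3 H4 H5]]] := seg_spec lpq lqf.
have cs : src (kcomp a (seg f p q)) = rng c' by rewrite src_comp.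
have sc : src c' = src f by rewrite {1}H5 src_comp.
apply: (@seg_eq _ a _ (kcomp c' g)) => //.
- by rewrite rng_comp ?sc.
by rewrite {1}H5 -comp_assoc // sc.
Qed.

Lemma seg_suf (f g : mor) p q : src f = rng g -> leN p q -> leN q (deg g) ->
  seg (kcomp f g) (addN (deg f) p) (addN (deg f) q) = seg g p q.
Proof.
move=> c lpq lqg.
have [a [c' [H1 H2 H3 H4 H5]]] := seg_spec lpq lqg.
have cs : src (kcomp a (seg g p q)) = rng c' by rewrite src_comp.
have ra : rng a = rng g by rewrite {1}H5 rng_comp // rng_comp.
have fa : src f = rng a by rewrite ra.
apply: (@seg_eq _ (kcomp f a) _ c') => //.
- by rewrite src_comp.
- by rewrite deg_comp // H3.
- by rewrite H4; nneq.
- nnle.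
rewrite {1}H5 comp_assoc //; last by rewrite rng_comp.
by rewrite comp_assoc.
Qed.

Lemma seg_split (f : mor) m n p : leN m n -> leN n p -> leN p (deg f) ->
  src (seg f m n) = rng (seg f n p) /\ seg f m p = kcomp (seg f m n) (seg f n p).
Proof.
move=> lmn lnp lpf.
have lmp : leN m p by nnle.
have [A [C [H1 H2 H3 H4 H5]]] := seg_spec lmp lpf.
have dS : deg (seg f m p) = addN (subN n m) (subN p n) by rewrite H4; nneq.
have [S1 [S2 [c12 d1 d2 eS]]] := fact_ex dS.
have rS1 : rng S1 = rng (seg f m p) by rewrite eS rng_comp.
have sS2 : src S2 = src (seg f m p) by rewrite eS src_comp.
have aS1 : src A = rng S1 by rewrite rS1.
have s2C : src S2 = rng C by rewrite sS2.
have E1 : seg f m n = S1.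
  apply: (@seg_eq _ A _ (kcomp S2 C)) => //.
  - by rewrite rng_comp.
  by rewrite {1}H5 eS comp_assoc // [RHS]comp_assoc ?src_comp.
have E2 : seg f n p = S2.
  apply: (@seg_eq _ (kcomp A S1) _ C) => //.
  - by rewrite src_comp.
  - by rewrite deg_comp // H3 d1; nneq.
  by rewrite {1}H5 eS comp_assoc.
by rewrite E1 E2 -eS.
Qed.

Lemma seg_rng0 (f : mor) q : leN q (deg f) -> rng (seg f z0 q) = rng f.
Proof.
move=> lq.
have l0 : leN z0 q by nnle.
have [a [c [H1 H2 H3 H4 H5]]] := seg_spec l0 lq.
have ea := deg0_id H3.
rewrite {2}H5 rng_comp ?rng_comp ?src_comp // -H1 ea src_idm.
by rewrite -ea.
Qed.

Lemma le0N (q : NN k) : leN z0 q.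
Proof. by move=> i; rewrite ffunE. Qed.
Lemma leNR (q : NN k) : leN q q.
Proof. by move=> i. Qed.
Lemma leN_addl (a q : NN k) : leN q (addN a q).
Proof. move=> i; rewrite ffunE; lia. Qed.
Lemma leN_addr (a q : NN k) : leN a (addN a q).
Proof. move=> i; rewrite ffunE; lia. Qed.
Lemma addN0 (a : NN k) : addN a z0 = a.
Proof. nneq. Qed.
Lemma subN0 (a : NN k) : subN a z0 = a.
Proof. nneq. Qed.

Implicit Types x y z : NN k -> NN k -> mor.

Lemma leN_trans (a b c : NN k) : leN a b -> leN b c -> leN a c.
Proof. move=> ? ?; nnle. Qed.

Lemma ip_comp x m n p : infpath x -> leN m n -> leN n p ->
  src (x m n) = rng (x n p) /\ x m p = kcomp (x m n) (x n p).
Proof. by case=> _ _ H; apply: H. Qed.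

Lemma ip_deg x m n : infpath x -> leN m n -> deg (x m n) = subN n m.
Proof. by case=> H _ _; apply: H. Qed.

Lemma ip_seg x p q b : infpath x -> leN p q -> leN q b ->
  seg (x z0 b) p q = x p q.
Proof.
move=> Hx lpq lqb.
have [c1 e1] := ip_comp Hx (le0N p) (leN_trans lpq lqb).
have [c2 e2] := ip_comp Hx lpq lqb.
have [c3 e3] := ip_comp Hx (le0N p) lpq.
apply: (@seg_eq _ (x z0 p) _ (x q b)) => //.
- by rewrite ip_deg ?subN0 //; apply: le0N.
- by rewrite ip_deg.
by rewrite e1 e2 comp_assoc // -c1 e2 rng_comp.
Qed.

Lemma ip_rng x q : infpath x -> rng (x z0 q) = rng (x z0 z0).
Proof.
move=> Hx; have [c e] := ip_comp Hx (leNR z0) (le0N q).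
by rewrite {1}e rng_comp.
Qed.

Lemma path_eq_init y z : infpath y -> infpath z ->
  (forall q, exists q', leN q q' /\ y z0 q' = z z0 q') -> path_eq y z.
Proof.
move=> Hy Hz H.
have H0 : forall q, y z0 q = z z0 q.
  move=> q; have [q' [lq e]] := H q.
  by rewrite -(ip_seg Hy (le0N q) lq) -(ip_seg Hz (le0N q) lq) e.
move=> p q lpq.
by rewrite -(ip_seg Hy lpq (leNR q)) -(ip_seg Hz lpq (leNR q)) H0.
Qed.

Lemma concat_init l x y q : is_concat l x y -> infpath x ->
  src l = rng (x z0 q) /\ y z0 (addN (deg l) q) = kcomp l (x z0 q).
Proof.
case=> Hy e0 Hs Hx.
have [c e] := ip_comp Hy (le0N (deg l)) (leN_addr (deg l) q).
have E : y (deg l) (addN (deg l) q) = x z0 q.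
  by rewrite -Hs ?addN0 //; apply: le0N.
by rewrite e0 E in c e; split.
Qed.

Definition cat (l : mor) x : NN k -> NN k -> mor :=
  fun p q => seg (kcomp l (x z0 q)) p q.

Lemma cat_concat l x : infpath x -> src l = rng (x z0 z0) -> is_concat l x (cat l x).
Proof.
move=> Hx sl.
have cF q : src l = rng (x z0 q) by rewrite ip_rng.
have dF q : deg (kcomp l (x z0 q)) = addN (deg l) q.
  by rewrite deg_comp // ip_deg ?subN0 //; apply: le0N.
have lF q : leN q (deg (kcomp l (x z0 q))) by rewrite dF; apply: leN_addl.
have pre q q' p : leN p q -> leN q q' ->
    seg (kcomp l (x z0 q')) p q = seg (kcomp l (x z0 q)) p q.
  move=> lpq lqq'.
  have [c e] := ip_comp Hx (le0N q) lqq'.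
  rewrite e comp_assoc // seg_pre //.
  by rewrite src_comp.
have Hc : infpath (cat l x).
  split.
  - move=> m n lmn; rewrite /cat.
    by have [a [c [_ _ _ -> _]]] := seg_spec lmn (lF n).
  - move=> m; apply: deg0_id; rewrite /cat.
    have [a [c [_ _ _ -> _]]] := seg_spec (leNR m) (lF m).
    nneq.
  move=> m n p lmn lnp; rewrite /cat.
  rewrite -(pre n p m lmn lnp).
  exact: seg_split.
split => //.
- rewrite /cat seg_pre //.
  exact: seg_whole. exact: le0N.
move=> p q lpq; rewrite /cat seg_suf //.
- exact: ip_seg (leN_addl _ _).
rewrite ip_deg ?subN0; first exact: leN_trans (leN_addl (deg l) q).
  done. exact: le0N.
Qed.

Hypothesis Hconv : no_empty_colours L.
Hypothesis Hsc : strongly_connected L.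

Lemma ones_ex (w : vert) j : j <= k ->
  exists l, rng l = w /\ forall i : 'I_k, i < j -> 0 < deg l i.
Proof.
elim: j => [|j IH] lt.
  by exists (idm w); split; [exact: rng_idm|].
have [l [rl Hl]] := IH (ltnW lt).
have [e de] := Hconv (Ordinal lt).
have [lam [r1 s1]] := Hsc (src l) (rng e).
have c1 : src l = rng lam by [].
have c2 : src (kcomp l lam) = rng e by rewrite src_comp.
exists (kcomp (kcomp l lam) e); split.
  by rewrite rng_comp // rng_comp.
move=> i lti; rewrite deg_comp // deg_comp // de !ffunE.
case: (ltnP i j) => hij.
  by have := Hl i hij; lia.
have -> : Ordinal lt == i.
  by apply/eqP/val_inj => /=; lia.
lia.
Qed.

Definition gone (w : vert) : mor :=
  epsilon (inhabits (idm w)) (fun l => rng l = w /\ forall i, 0 < deg l i).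

Lemma gone_spec w : rng (gone w) = w /\ forall i, 0 < deg (gone w) i.
Proof.
rewrite /gone; apply: (epsilon_spec (inhabits (idm w))
  (fun l : mor => rng l = w /\ forall i, 0 < deg l i)).
have [l [rl Hl]] := ones_ex w (leqnn k).
by exists l; split => // i; apply: Hl.
Qed.

Fixpoint chain (w : vert) (j : nat) : mor :=
  match j with 0 => idm w | S j => kcomp (chain w j) (gone (src (chain w j))) end.

Lemma chain_spec w j : rng (chain w j) = w /\ forall i, j <= deg (chain w j) i.
Proof.
elim: j => [|j [r H]] /=; first by rewrite rng_idm.
have [r1 H1] := gone_spec (src (chain w j)).
split; first by rewrite rng_comp.
move=> i; rewrite deg_comp // ffunE.
by have := H i; have := H1 i; lia.
Qed.

Lemma chain_pre w j d : exists h, src (chain w j) = rng h /\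
  chain w (j + d) = kcomp (chain w j) h.
Proof.
elim: d => [|d [h [c e]]].
  by exists (idm (src (chain w j))); rewrite addn0 rng_idm comp_idr.
have [r1 _] := gone_spec (src (chain w (j + d))).
exists (kcomp h (gone (src (chain w (j + d))))); rewrite addnS /=.
have c' : src h = rng (gone (src (chain w (j + d)))) by rewrite r1 e src_comp.
split; first by rewrite rng_comp.
by rewrite {1}e comp_assoc.
Qed.

Lemma chain_seg w j j' p q : leN p q -> (forall i, q i <= j) -> (forall i, q i <= j') ->
  seg (chain w j) p q = seg (chain w j') p q.
Proof.
move=> lpq H H'.
have E : forall j0 d, (forall i, q i <= j0) -> seg (chain w (j0 + d)) p q = seg (chain w j0) p q.
  move=> j0 d Hj; have [h [c e]] := chain_pre w j0 d.
  rewrite e seg_pre // => i; have [_ D] := chain_spec w j0.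
  by have := D i; have := Hj i; lia.
by rewrite -(E j j' H) addnC E.
Qed.

Definition bnd (q : NN k) : nat := \max_(i < k) q i.

Lemma bnd_ge (q : NN k) i : q i <= bnd q.
Proof. exact: (leq_bigmax (F := fun i => q i)). Qed.

Lemma rng_deg (w : vert) (n : NN k) : exists l, rng l = w /\ deg l = n.
Proof.
have [r D] := chain_spec w (bnd n).
have ln : leN n (deg (chain w (bnd n))).
  by move=> i; have := D i; have := bnd_ge n i; lia.
have [a [c [_ _ _ H _]]] := seg_spec (le0N n) ln.
exists (seg (chain w (bnd n)) z0 n); split.
  by rewrite seg_rng0.
by rewrite H subN0.
Qed.

Lemma src_deg (v : vert) (n : NN k) : exists l, src l = v /\ deg l = n.
Proof.
have [f [_ df]] := rng_deg v n.
have [lam [r1 s1]] := Hsc (src f) v.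
have c : src f = rng lam by [].
have dg : deg (kcomp f lam) = addN (deg lam) n by rewrite deg_comp // df; nneq.
have [a [b [cab _ db e]]] := fact_ex dg.
exists b; split => //.
by rewrite -s1 -(src_comp c) e src_comp.
Qed.

Definition bpath (w : vert) : NN k -> NN k -> mor :=
  fun p q => seg (chain w (bnd q)) p q.

Lemma bpath_ok w : infpath (bpath w) /\ rng (bpath w z0 z0) = w.
Proof.
have lb : forall q, leN q (deg (chain w (bnd q))).
  move=> q i; have [_ D] := chain_spec w (bnd q).
  by have := D i; have := bnd_ge q i; lia.
split; last first.
  by rewrite /bpath seg_rng0 //; have [] := chain_spec w (bnd z0).
split.
- move=> m n lmn; rewrite /bpath.
  by have [a [c [_ _ _ -> _]]] := seg_spec lmn (lb n).
- move=> m; apply: deg0_id; rewrite /bpath.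
  have [a [c [_ _ _ -> _]]] := seg_spec (leNR m) (lb m).
  nneq.
move=> m n p lmn lnp; rewrite /bpath.
rewrite (@chain_seg w (bnd n) (bnd p) m n) //.
- exact: seg_split.
- by move=> i; apply: bnd_ge.
by move=> i; have := lnp i; have := bnd_ge p i; lia.
Qed.

Lemma periodic_det m n y y' : periodic_pair L m n -> infpath y -> infpath y' ->
  y z0 m = y' z0 m -> y z0 n = y' z0 n.
Proof.
move=> Hp Hy Hy' e.
have rr : rng (y' z0 z0) = rng (y z0 z0) by rewrite -(ip_rng m Hy) -(ip_rng m Hy') e.
have [nu [snu dnu]] := src_deg (rng (y z0 z0)) n.
have HY := cat_concat Hy snu.
have HY' : is_concat nu y' (cat nu y') by apply: cat_concat; rewrite // rr.
have [_ e1] := concat_init m HY Hy.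
have [_ e2] := concat_init m HY' Hy'.
have lmn : leN m (addN m n) by apply: leN_addr.
have lmn' : leN (addN m n) (addN (deg nu) m) by rewrite dnu; nnle.
have E : cat nu y m (addN m n) = cat nu y' m (addN m n).
  have [HYi _ _] := HY; have [HYi' _ _] := HY'.
  by rewrite -(ip_seg HYi lmn lmn') -(ip_seg HYi' lmn lmn') e1 e2 e.
have F : forall yy Y, is_concat nu yy Y -> infpath Y ->
    Y m (addN m n) = yy z0 n.
  move=> yy Y [HYi _ H3] _.
  have := Hp Y HYi z0 n (le0N n); rewrite !addN0 => ->.
  by rewrite -H3 ?dnu ?addN0 //; apply: le0N.
have [HYi _ _] := HY; have [HYi' _ _] := HY'.
by rewrite -(F y _ HY HYi) -(F y' _ HY' HYi') E.
Qed.

Lemma path_at (v : vert) : exists x, infpath x /\ rng (x z0 z0) = v.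
Proof. by exists (bpath v); apply: bpath_ok. Qed.

Implicit Types (a b : NN k) (M t mu : mor).

Lemma theta_unique a b M (t1 t2 : mor) : theta_prop a b M t1 -> theta_prop a b M t2 -> t1 = t2.
Proof.
move=> [d1 H1] [d2 H2].
have [x [Hx rx]] := path_at (src M).
have [y1 [z1 [Hy1 Hz1 P1]]] := H1 x Hx rx.
have [y2 [z2 [Hy2 Hz2 P2]]] := H2 x Hx rx.
have T : forall t y z, is_concat M x y -> is_concat t x z -> path_eq y z -> deg t = b ->
    t = seg (kcomp M (x z0 b)) z0 b.
  move=> t y z Hy Hz P dt.
  have [Hyi _ _] := Hy; have [Hzi e0 _] := Hz.
  have [_ e] := concat_init b Hy Hx.
  rewrite -e ip_seg //; last by apply: leN_addl.
  rewrite -dt P ?e0 //; try apply: le0N.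
  exact: le0N.
by rewrite (T _ _ _ Hy1 Hz1 P1 d1) (T _ _ _ Hy2 Hz2 P2 d2).
Qed.

Lemma theta_eq a b M t : theta_prop a b M t -> theta L a b M = t.
Proof.
move=> H.
have S : theta_prop a b M (epsilon (inhabits M) (theta_prop a b M)).
  by apply: epsilon_spec; exists t.
exact: (theta_unique S H).
Qed.

Lemma theta_rs a b M t : theta_prop a b M t -> rng t = rng M /\ src t = src M.
Proof.
move=> [d H].
have [x [Hx rx]] := path_at (src M).
have [y [z [Hy Hz P]]] := H x Hx rx.
have [Hyi ey _] := Hy; have [Hzi ez _] := Hz.
have [c _] := concat_init z0 Hz Hx.
split; last by rewrite c.
rewrite -{1}ez (ip_rng (deg t) Hzi) -P; last exact: leNR.
by rewrite -(ip_rng (deg M) Hyi) ey.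
Qed.

Lemma theta_exists m n mu : periodic_pair L m n -> deg mu = m ->
  exists t, theta_prop m n mu t.
Proof.
move=> Hp dmu.
have [x0 [Hx0 rx0]] := path_at (src mu).
have C0 := cat_concat Hx0 (esym rx0).
have [Hy0 ey0 _] := C0.
exists (cat mu x0 z0 n).
have key : forall x, infpath x -> rng (x z0 z0) = src mu ->
   [/\ is_concat mu x (cat mu x), cat mu x z0 n = cat mu x0 z0 n &
       forall q, cat mu x n (addN n q) = x z0 q].
  move=> x Hx rx.
  have C := cat_concat Hx (esym rx).
  have [Hy ey Hs] := C.
  split => //.
  - by apply: (periodic_det Hp Hy Hy0); rewrite -dmu ey ey0.
  move=> q.
  have := Hp _ Hy z0 q (le0N q); rewrite !addN0 => <-.
  by rewrite -dmu -{1}(addN0 (deg mu)) Hs //; apply: le0N.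
split.
  by rewrite (ip_deg Hy0 (le0N n)) subN0.
move=> x Hx rx.
have [C e1 e2] := key x Hx rx.
have [Hy _ _] := C.
have [c1 E1] := ip_comp Hy (le0N n) (leNR n).
have st : src (cat mu x0 z0 n) = rng (x z0 z0).
  by rewrite -e1 c1 -(e2 z0) addN0.
have D := cat_concat Hx st.
exists (cat mu x), (cat (cat mu x0 z0 n) x); split => //.
have [Hz _ _] := D.
apply: path_eq_init => // q.
exists (addN n q); split; first exact: leN_addl.
have dt : deg (cat mu x0 z0 n) = n by rewrite (ip_deg Hy0 (le0N n)) subN0.
have [_ E] := concat_init q D Hx.
rewrite dt in E; rewrite E.
have [_ E'] := ip_comp Hy (le0N n) (leN_addr n q).
by rewrite E' e1 e2.
Qed.

Lemma part1 m n p q : periodic_pair L m n -> diffZ p q = diffZ m n ->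
  periodic_pair L p q.
Proof.
move=> Hp E x Hx s t lst.
have Hi i : p i + n i = q i + m i.
  by have := congr1 (fun f : ZZ k => f i) E; rewrite !ffunE /=; lia.
pose cm : NN k := [ffun i => m i - p i].
pose cp : NN k := [ffun i => p i - m i].
have [lam [sl dl]] := src_deg (rng (x z0 z0)) cm.
have [HY _ Hs] := cat_concat Hx sl.
have l1 : leN (addN p s) (addN p t) by nnle.
have l2 : leN (addN q s) (addN q t) by nnle.
rewrite -(Hs _ _ l1) -(Hs _ _ l2) dl.
have e1 : forall u, addN cm (addN p u) = addN m (addN cp u).
  by move=> u; apply/ffunP => i; rewrite !ffunE; lia.
have e2 : forall u, addN cm (addN q u) = addN n (addN cp u).
  by move=> u; apply/ffunP => i; rewrite !ffunE; have := Hi i; lia.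
rewrite !e1 !e2; apply: Hp => //; nnle.
Qed.

Lemma shift_trans x a b c : shift_eq x a b -> shift_eq x b c -> shift_eq x a c.
Proof. by move=> H1 H2 p q l; rewrite H1 // H2. Qed.

Lemma part2 : is_subgroup (Per L).
Proof.
split.
  exists z0, z0; split; first by apply/ffunP => i; rewrite !ffunE.
  by move=> x _ p q l.
move=> A B [m1 [n1 [-> P1]]] [m2 [n2 [-> P2]]].
exists (addN m1 n2), (addN n1 m2); split.
  by apply/ffunP => i; rewrite !ffunE /=; lia.
move=> x Hx p q l.
have e1 : forall u, addN (addN m1 n2) u = addN m1 (addN n2 u) by move=> u; nneq.
have e2 : forall u, addN (addN n1 n2) u = addN n1 (addN n2 u) by move=> u; nneq.
have e3 : forall u, addN (addN n1 n2) u = addN n2 (addN n1 u) by move=> u; nneq.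
have e4 : forall u, addN (addN n1 m2) u = addN m2 (addN n1 u) by move=> u; nneq.
rewrite !e1 P1 //; last by nnle.
rewrite -!e2 !e3 -P2 //; last by nnle.
by rewrite -!e4.
Qed.

Lemma prop_comp M t x y z a b : is_concat M x y -> is_concat t x z -> path_eq y z ->
  infpath x -> addN (deg M) a = addN (deg t) b -> kcomp M (x z0 a) = kcomp t (x z0 b).
Proof.
move=> Cy Cz P Hx e.
have [_ E1] := concat_init a Cy Hx.
have [_ E2] := concat_init b Cz Hx.
by rewrite -E1 -E2 P ?e //; apply: le0N.
Qed.

Lemma part3a m n mu alpha : periodic_pair L m n -> deg mu = m -> src alpha = rng mu ->
  theta L (addN (deg alpha) m) (addN (deg alpha) n) (kcomp alpha mu)
  = kcomp alpha (theta L m n mu).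
Proof.
move=> Hp dmu sa.
have [t Ht] := theta_exists Hp dmu.
rewrite (theta_eq Ht); apply: theta_eq.
have [rt st] := theta_rs Ht.
have [dt H] := Ht.
have sat : src alpha = rng t by rewrite rt.
split; first by rewrite deg_comp // dt.
move=> x Hx rx.
have rx' : src (kcomp alpha t) = rng (x z0 z0) by rewrite src_comp // st -(src_comp sa).
have Cy := cat_concat Hx (esym rx).
have Cz := cat_concat Hx rx'.
exists (cat (kcomp alpha mu) x), (cat (kcomp alpha t) x); split => //.
have [Hy _ _] := Cy; have [Hz _ _] := Cz.
apply: path_eq_init => // Q.
have eI : addN (deg (kcomp alpha mu)) (addN n Q) = addN (deg (kcomp alpha t)) (addN m Q).
  by rewrite !deg_comp // dmu dt; nneq.
exists (addN (deg (kcomp alpha mu)) (addN n Q)); split.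
  by move=> i; rewrite !ffunE; lia.
have [_ E1] := concat_init (addN n Q) Cy Hx.
have [_ E2] := concat_init (addN m Q) Cz Hx.
rewrite E1 eI E2.
have rmu : src mu = rng (x z0 (addN n Q)) by rewrite ip_rng // rx src_comp.
have rtt : src t = rng (x z0 (addN m Q)) by rewrite ip_rng // rx src_comp // st.
have sm : src mu = rng (x z0 z0) by rewrite rx src_comp.
have [y1 [z1 [C1 C2 P]]] := H x Hx (esym sm).
rewrite -!comp_assoc //.
congr (kcomp alpha _).
apply: (prop_comp C1 C2 P Hx).
by rewrite dmu dt; nneq.
Qed.

Lemma part3b m n mu beta : periodic_pair L m n -> deg mu = m -> rng beta = src mu ->
  theta L (addN m (deg beta)) (addN n (deg beta)) (kcomp mu beta)
  = kcomp (theta L m n mu) beta.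
Proof.
move=> Hp dmu rb.
have [t Ht] := theta_exists Hp dmu.
rewrite (theta_eq Ht); apply: theta_eq.
have [rt st] := theta_rs Ht.
have [dt H] := Ht.
have stb : src t = rng beta by rewrite st.
have smb : src mu = rng beta by [].
split; first by rewrite deg_comp // dt.
move=> x Hx rx.
rewrite src_comp // in rx.
have rx' : src (kcomp t beta) = rng (x z0 z0) by rewrite src_comp.
have rx'' : src (kcomp mu beta) = rng (x z0 z0) by rewrite src_comp.
have Cy := cat_concat Hx rx''.
have Cz := cat_concat Hx rx'.
have CX := cat_concat Hx (esym rx).
have [HX eX _] := CX.
have rX : rng (cat beta x z0 z0) = src mu.
  by rewrite -(ip_rng (deg beta) HX) eX.
have [y1 [z1 [C1 C2 P]]] := H _ HX rX.
exists (cat (kcomp mu beta) x), (cat (kcomp t beta) x); split => //.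
have [Hy _ _] := Cy; have [Hz _ _] := Cz.
apply: path_eq_init => // Q.
have eI : addN (deg (kcomp mu beta)) (addN n Q) = addN (deg (kcomp t beta)) (addN m Q).
  by rewrite !deg_comp // dmu dt; nneq.
exists (addN (deg (kcomp mu beta)) (addN n Q)); split.
  by move=> i; rewrite !ffunE; lia.
have [_ E1] := concat_init (addN n Q) Cy Hx.
have [_ E2] := concat_init (addN m Q) Cz Hx.
rewrite E1 eI E2.
have [c3 E3] := concat_init (addN n Q) CX Hx.
have [c4 E4] := concat_init (addN m Q) CX Hx.
rewrite -!comp_assoc // -E3 -E4.
apply: (prop_comp C1 C2 P HX).
by rewrite dmu dt; nneq.
Qed.

End KGlemmas.

Theorem proposition5p2 (k : nat) (L : kgraph k)
  (Hconv : no_empty_colours L) (Hfin : finite_kgraph L)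
  (Hsc : strongly_connected L) :
  (forall m n p q : NN k, periodic_pair L m n ->
      diffZ p q = diffZ m n -> periodic_pair L p q) /\
  is_subgroup (Per L) /\
  (forall (m n : NN k) (mu : mor L), Per L (diffZ m n) -> deg mu = m ->
     (forall alpha : mor L, src alpha = rng mu ->
        theta L (addN (deg alpha) m) (addN (deg alpha) n) (kcomp alpha mu)
        = kcomp alpha (theta L m n mu)) /\
     (forall beta : mor L, rng beta = src mu ->
        theta L (addN m (deg beta)) (addN n (deg beta)) (kcomp mu beta)
        = kcomp (theta L m n mu) beta)).
Proof.
split; [|split].
- by move=> m n p q Hp E; apply: (part1 Hconv Hsc Hp E).
- exact: part2.
move=> m n mu [m' [n' [E Hp']]] dmu.
have Hp : periodic_pair L m n := part1 Hconv Hsc Hp' E.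
split.
- by move=> alpha sa; apply: (part3a Hconv Hsc Hp dmu sa).
by move=> beta rb; apply: (part3b Hconv Hsc Hp dmu rb).
Qed.
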